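(* Let $X$ be a real random variable with density $p$, $\mathbb{E}X=0$, $\mathrm{Var}(X)=1$, $\mathbb{E}|X|^s<\infty$ for some $s>2$, and suppose $\|p-\phi\|_2\le1$. Then there exist $C_1,C_2>0$ such that \[ D(X)\le (C_1+\|p-\phi\|_\infty)\big(\|p-\phi\|_1+\|p-\phi\|_2\big)+C_2(\mathbb{E}|X|^s)^{2/s}\big(\|p-\phi\|_1+\|p-\phi\|_2\big)^{1-2/s}. \]
   Context: $\phi(x)=(2\pi)^{-1/2}e^{-x^2/2}$. $D(X)$ denotes the Kullback–Leibler divergence of $X$ from a Gaussian with the same mean and variance as $X$; here $D(X)=\int p\ln(p/\phi)$. $\|\cdot\|_q$ is the $L^q(\mathbb{R})$ norm. *)

(* Defs.v *)
From HB Require Import structures.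
From mathcomp Require Import all_boot all_order all_algebra.
From mathcomp Require Import all_classical all_reals all_analysis.
Set Implicit Arguments. Unset Strict Implicit. Unset Printing Implicit Defensive.
Import Order.TTheory GRing.Theory Num.Theory.
Local Open Scope ring_scope.

Definition phi {R : realType} (x : R) : R :=
  (Num.sqrt (pi *+ 2))^-1 * expR (- (x ^+ 2) / 2).

Notation leb R := (@lebesgue_measure R).

Definition Lqnorm {R : realType} (q : \bar R) (f : R -> R) : \bar R :=
  Lnorm (leb R) q (fun x => (f x)%:E).

Definition is_density {R : realType} (p : R -> R) : Prop :=
  measurable_fun [set: R] p /\ (forall x, 0 <= p x) /\
  (\int[leb R]_x (p x)%:E = 1)%E.

(* D(X) = \int p ln(p/phi)  (with 0 ln 0 = 0, which holds since ln 0 = 0) *)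
Definition KLgauss {R : realType} (p : R -> R) : \bar R :=
  (\int[leb R]_x (p x * ln (p x / phi x))%:E)%E.

(* Main.v *)
Require Import Defs.
From HB Require Import structures.
From mathcomp Require Import all_boot all_order all_algebra.
From mathcomp Require Import all_classical all_reals all_analysis.
From mathcomp Require Import ring lra measurable_realfun.
Import Order.TTheory GRing.Theory Num.Theory.
Local Open Scope ring_scope.

Lemma ln_le_sub1 {R : realType} (y : R) : 0 < y -> ln y <= y - 1.
Proof.
move=> y0; have := expR_ge1Dx (ln y); rewrite lnK ?posrE //; lra.
Qed.

Lemma sqrt2pi_ge1 {R : realType} : 1 <= Num.sqrt (pi *+ 2 : R).
Proof.
have := pi_ge2 R => hpi.
rewrite -sqrtr1 ler_sqrt; rewrite mulr2n; lra.
Qed.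

Lemma phi_gt0 {R : realType} (x : R) : 0 < phi x.
Proof.
rewrite /phi mulr_gt0 ?expR_gt0 // invr_gt0.
by apply: lt_le_trans (@sqrt2pi_ge1 R).
Qed.

Lemma phi_le1 {R : realType} (x : R) : phi x <= 1.
Proof.
have s1 := @sqrt2pi_ge1 R.
have s0 : 0 < Num.sqrt (pi *+ 2 : R) by apply: lt_le_trans s1.
have i1 : (Num.sqrt (pi *+ 2 : R))^-1 <= 1 by rewrite invr_le1 // unitfE gt_eqF.
have hE : expR (- (x ^+ 2) / 2) <= 1.
  rewrite expR_le1 mulNr oppr_le0 divr_ge0 // sqr_ge0 //.
rewrite /phi; have := ler_pM _ _ i1 hE; rewrite mulr1; apply.
  by rewrite invr_ge0 ltW.
exact: expR_ge0.
Qed.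

Lemma ln_phi {R : realType} (x : R) :
  ln (phi x) = - ln (Num.sqrt (pi *+ 2)) - x ^+ 2 / 2.
Proof.
have s0 : 0 < Num.sqrt (pi *+ 2 : R) by apply: lt_le_trans (@sqrt2pi_ge1 R).
rewrite /phi lnM ?posrE ?invr_gt0 ?expR_gt0 // lnV ?posrE // expRK.
by rewrite mulNr.
Qed.

Lemma pointwise {R : realType} (P F c x : R) : 0 <= P -> 0 < F -> F <= 1 ->
  ln F = - c - x ^+ 2 / 2 -> 0 <= c ->
  P * ln (P / F) <= (1 + c) * `|P - F| + `|P - F| `^ 2 + x ^+ 2 * Num.max (P - F) 0.
Proof.
move=> P0 F0 F1 lnF c0.
have x20 : 0 <= x ^+ 2 by rewrite sqr_ge0.
have rhs0 : 0 <= (1 + c) * `|P - F| + `|P - F| `^ 2 + x ^+ 2 * Num.max (P - F) 0.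
  have m0 : 0 <= Num.max (P - F) 0 by rewrite le_max lexx orbT.
  have t1 : 0 <= (1 + c) * `|P - F| by apply: mulr_ge0 => //; lra.
  have t2 : 0 <= x ^+ 2 * Num.max (P - F) 0 by apply: mulr_ge0.
  have t3 : 0 <= `|P - F| `^ 2 by apply: powR_ge0.
  lra.
case: (leP P F) => PF.
  have [P00|Pgt0] := eqVneq P 0; first by apply: le_trans rhs0; rewrite P00 mul0r.
  have Pp : 0 < P by rewrite lt_neqAle eq_sym Pgt0.
  apply: le_trans rhs0; rewrite mulr_ge0_le0 // ln_le0 // ler_pdivrMr // mul1r //.
have Pp : 0 < P by apply: lt_trans F0 PF.
have D0 : 0 < P - F by lra.
rewrite gtr0_norm // powR_mulrn ?(ltW D0) // (_ : Num.max (P - F) 0 = P - F); last first.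
  by apply/max_idPl; lra.
have L : ln (P / F) = ln P + c + x ^+ 2 / 2.
  rewrite ln_div ?posrE // lnF; lra.
have lnP : ln P <= P - F by have := ln_le_sub1 _ Pp; lra.
have FL : F * ln (P / F) <= P - F.
  have := ln_le_sub1 _ (divr_gt0 Pp F0).
  move/(ler_wpM2l (ltW F0)); rewrite mulrBr mulrCA divff ?gt_eqF // mulr1 mulr1 //.
have h1 : (P - F) * ln P <= (P - F) * (P - F) by apply: ler_wpM2l; lra.
have -> : P * ln (P / F) = (P - F) * ln (P / F) + F * ln (P / F) by ring.
rewrite L expr2.
have h2 : 0 <= (P - F) * x ^+ 2 by rewrite mulr_ge0 //; lra.
rewrite expr2 in h2 x20.
nra.
Qed.
Theorem corollary2p3 (R : realType) (s : R) (hs : 2 < s) :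
  exists C1 C2 : R, 0 < C1 /\ 0 < C2 /\
  forall p : R -> R,
    is_density p ->
    (leb R).-integrable [set: R] (fun x => (x * p x)%R%:E) ->
    (\int[leb R]_x (x * p x)%R%:E = 0)%E ->
    (\int[leb R]_x (x ^+ 2 * p x)%R%:E = 1)%E ->
    (\int[leb R]_x ((`|x| `^ s) * p x)%R%:E < +oo)%E ->
    (Lqnorm 2%:E (p \- phi)%R <= 1)%E ->
    let N12 := (Lqnorm 1%:E (p \- phi)%R + Lqnorm 2%:E (p \- phi)%R)%E in
    let Ms := fine (\int[leb R]_x ((`|x| `^ s) * p x)%R%:E) in
    (KLgauss p <=
       (C1%:E + Lqnorm +oo%E (p \- phi)%R) * N12
       + C2%:E * (Ms `^ (2 / s))%R%:E * (N12 `^ (1 - 2 / s)%R))%E.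
Proof.
set c := ln (Num.sqrt (pi *+ 2 : R)).
have c0 : 0 <= c by apply: ln_ge0; exact: @sqrt2pi_ge1 R.
exists (1 + c), 1; split; first lra.
split; first lra.
move=> p [mp [p0 p1]] _ _ _ hMs hN2; cbv zeta.
have mphi : measurable_fun setT (@phi R).
  rewrite /phi; apply: measurable_funM; first exact: measurable_cst.
  apply: measurableT_comp; first exact: measurable_expR.
  apply: measurable_funM; last exact: measurable_cst.
  exact: (measurable_funN (exprn_measurable 2)).
have phiV (x : R) : (phi x)^-1 = Num.sqrt (pi *+ 2) * expR (x ^+ 2 / 2).
  rewrite /phi invfM invrK -expRN; congr (_ * expR _); rewrite mulNr opprK //.
have mphiV : measurable_fun setT (fun x => (@phi R x)^-1).
  rewrite (_ : (fun x => (@phi R x)^-1) = (fun x => Num.sqrt (pi *+ 2) * expR (x ^+ 2 / 2))); last first.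
    by apply: funext => x; rewrite phiV.
  apply: measurable_funM; first exact: measurable_cst.
  apply: measurableT_comp; first exact: measurable_expR.
  apply: measurable_funM; last exact: measurable_cst.
  exact: exprn_measurable.
set d := (p \- phi)%R.
have md : measurable_fun setT d by apply: measurable_funB.
set dp := (d \max (cst 0))%R.
have mdp : measurable_fun setT dp by apply: measurable_maxr => //; exact: measurable_cst.
have dp0 x : 0 <= dp x by rewrite /dp /= le_max lexx orbT.
have dpp x : dp x <= p x.
  rewrite /dp /= ge_max p0 andbT /d /=; have := phi_gt0 x; lra.
set n1 := Lqnorm 1 d; set n2 := Lqnorm 2 d; set ni := Lqnorm +oo d.
set Ms := fine _.
set a := 2 / s.
have a0 : 0 < a by rewrite /a divr_gt0 //; lra.
have a1 : a < 1 by rewrite /a ltr_pdivrMr; lra.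
set b := 1 - a.
have b0 : 0 < b by rewrite /b; lra.
set g := fun x : R => (1 + c) * `|d x| + `|d x| `^ 2 + x ^+ 2 * dp x.
have mabsd : measurable_fun setT (fun x => `|d x|).
  by apply: measurableT_comp; [exact: normr_measurable | exact: md].
have mg1 : measurable_fun setT (fun x => (1 + c) * `|d x|).
  by apply: measurable_funM => //; exact: measurable_cst.
have mg2 : measurable_fun setT (fun x => `|d x| `^ 2).
  exact: (@measurableT_comp _ _ _ _ _ _ (@powR R ^~ 2) _ (fun x => `|d x|) (measurable_powR 2) mabsd).
have mg3 : measurable_fun setT (fun x : R => x ^+ 2 * dp x).
  by apply: measurable_funM => //; exact: exprn_measurable.
have step1 : (KLgauss p <= \int[leb R]_x (g x)%:E)%E.
  rewrite /KLgauss integralE.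
  set f := (fun x => (p x * ln (p x / phi x))%:E).
  have mf : measurable_fun setT f.
    apply/measurable_EFinP; apply: measurable_funM => //.
    apply: measurableT_comp; first exact: measurable_ln.
    exact: measurable_funM.
  apply: (@le_trans _ _ (\int[leb R]_x f^\+ x)%E).
    have := @leeB _ (\int[leb R]_x f^\+ x)%E (\int[leb R]_x f^\+ x)%E (\int[leb R]_x f^\- x)%E 0%E (lexx _) (integral_ge0 _ _).
    rewrite sube0; apply => x _; exact: funeneg_ge0.
  apply: ge0_le_integral => //.
  - exact: (measurable_funepos mf).
  - apply/measurable_EFinP; apply: measurable_funD => //; exact: measurable_funD.
  move=> x _; rewrite funeposE ge_max; apply/andP; split; rewrite lee_fin.
    by apply: pointwise => //; [exact: phi_gt0 | exact: phi_le1 | exact: ln_phi].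
  rewrite /g; have := dp0 x; have := powR_ge0 `|d x| 2; have := normr_ge0 (d x).
  have := sqr_ge0 x; nra.
have step2 : (\int[leb R]_x (g x)%:E = (1 + c)%:E * \int[leb R]_x (`|d x|)%:E
    + \int[leb R]_x (`|d x| `^ 2)%:E + \int[leb R]_x (x ^+ 2 * dp x)%:E)%E.
{
  rewrite /g.
  under eq_integral do rewrite !EFinD.
  have nn x : (0 <= (1 + c) * `|d x|) /\ (0 <= `|d x| `^ 2) /\ (0 <= x ^+ 2 * dp x).
    split; first by apply: mulr_ge0 => //; lra.
    by split; [exact: powR_ge0 | apply: mulr_ge0; [exact: sqr_ge0 | exact: dp0]].
  rewrite ge0_integralD //; try (by move=> x _; rewrite lee_fin; case: (nn x) => [? [? ?]]; lra);
    try (by apply/measurable_EFinP; repeat apply: measurable_funD).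
  rewrite ge0_integralD //; try (by move=> x _; rewrite lee_fin; case: (nn x) => [? [? ?]]; lra);
    try (by apply/measurable_EFinP; repeat apply: measurable_funD).
  congr (_ + _ + _).
  under eq_integral do rewrite EFinM.
  rewrite ge0_integralZl //.
  all: try (by apply/measurable_EFinP).
  all: try (by move=> x _; rewrite lee_fin).
  all: have h10 : (0:R) <= 1 + c by lra.
  all: rewrite -lee_fin in h10; exact: h10.
}
have step3 : (\int[leb R]_x (`|d x|)%:E = n1)%E.
  by rewrite /n1 /Lqnorm Lnorm1; apply: eq_integral => x _; rewrite abse_EFin.
have step4 : (\int[leb R]_x (`|d x| `^ 2)%:E <= n2)%E.
{ have := @poweR_Lnorm _ _ R (leb R) (fun x => (d x)%:E) 2 ltac:(by []).
  rewrite -/(Lqnorm 2%:E d) -/n2.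
  under eq_integral do rewrite abse_EFin poweR_EFin.
  move=> <-.
  have n20 : (0 <= n2)%E by exact: Lnorm_ge0.
  move: n20 hN2; rewrite -/n2; case: n2 => [r| |] //=.
  move=> r0 r1; have r0' : (0:R) <= r by move: r0; rewrite -[0%E]/(0%:E) lee_fin.
  move: r1; rewrite !lee_fin => r1.
  rewrite powR_mulrn // expr2; nra. }
set F := fun x : R => x ^+ 2 * dp x `^ a.
set G := fun x : R => `|d x| `^ b.
have mF : measurable_fun setT F.
  apply: measurable_funM; first exact: exprn_measurable.
  exact: (@measurableT_comp _ _ _ _ _ _ (@powR R ^~ a) _ dp (measurable_powR a) mdp).
have mG : measurable_fun setT G.
  exact: (@measurableT_comp _ _ _ _ _ _ (@powR R ^~ b) _ (fun x => `|d x|) (measurable_powR b) mabsd).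
have ab : a + b = 1 by rewrite /b; lra.
have FG x : x ^+ 2 * dp x = `|(F \* G)%R x|.
  rewrite /F /G /= -mulrA ger0_norm; last first.
    by apply: mulr_ge0; [exact: sqr_ge0 | apply: mulr_ge0; exact: powR_ge0].
  congr (_ * _).
  have [dpos|dneg] := ltP 0 (d x).
    have -> : dp x = `|d x| by rewrite /dp /= ger0_norm ?(ltW dpos) //; apply/max_idPl; exact: ltW.
    rewrite -powRD; last by rewrite ab oner_eq0.
    by rewrite ab powRr1 // normr_ge0.
  have -> : dp x = 0 by rewrite /dp /=; apply/max_idPr.
  by rewrite powR0 ?gt_eqF // mul0r.
have step5 : (\int[leb R]_x (x ^+ 2 * dp x)%:E <=
    Lnorm (leb R) (a^-1)%:E (EFin \o F) * Lnorm (leb R) (b^-1)%:E (EFin \o G))%E.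
{ apply: le_trans; last first.
    apply: hoelder => //; rewrite ?invr_gt0 // !invrK //.
  rewrite Lnorm1; apply: ge0_le_integral => //.
  - by move=> x _; rewrite lee_fin mulr_ge0 ?sqr_ge0.
  - apply/measurable_EFinP; exact: mg3.
  - apply: measurableT_comp => //; apply/measurable_EFinP; exact: measurable_funM.
  by move=> x _; rewrite FG /comp abse_EFin. }
have hMsE : (\int[leb R]_x (`|x| `^ s * p x)%:E = Ms%:E)%E.
  rewrite /Ms fineK // ge0_fin_numE //.
  by apply: integral_ge0 => x _; rewrite lee_fin mulr_ge0 ?powR_ge0.
have mxs : measurable_fun setT (fun x : R => `|x| `^ s).
  apply: (measurableT_comp (measurable_powR s)) => //; exact: normr_measurable.
have step6 : (Lnorm (leb R) (a^-1)%:E (EFin \o F) <= (Ms `^ a)%:E)%E.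
{ rewrite unlock invrK -poweR_EFin.
  apply: gt0_ler_poweR; first exact: ltW.
  - by rewrite in_itv /= leey andbT; apply: integral_ge0 => x _; rewrite lee_fin powR_ge0.
  - rewrite in_itv /= leey andbT -hMsE; apply: integral_ge0 => x _.
    by rewrite lee_fin mulr_ge0 ?powR_ge0.
  have Fpow x : (`|(EFin \o F) x| `^ a^-1 = (`|x| `^ s * dp x)%:E)%E.
    rewrite /comp abse_EFin poweR_EFin ger0_norm; last first.
      by apply: mulr_ge0; [exact: sqr_ge0 | exact: powR_ge0].
    rewrite /F powRM; first last.
    - exact: powR_ge0.
    - exact: sqr_ge0.
    rewrite -powRrM mulfV ?gt_eqF // powRr1 //.
    rewrite -(real_normK (num_real x)) -powR_mulrn // -powRrM.
    by congr (_ `^ _ * _)%:E; rewrite /a invf_div; field; lra.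
  under eq_integral do rewrite Fpow.
  rewrite -hMsE; apply: ge0_le_integral => //.
  - by move=> x _; rewrite lee_fin mulr_ge0 ?powR_ge0.
  - by apply/measurable_EFinP; apply: measurable_funM.
  - by apply/measurable_EFinP; apply: measurable_funM.
  move=> x _; rewrite lee_fin; apply: ler_wpM2l; [exact: powR_ge0 | exact: dpp]. }
have step7 : (Lnorm (leb R) (b^-1)%:E (EFin \o G) = n1 `^ b)%E.
{ rewrite unlock invrK -step3; congr (_ `^ _)%E.
  apply: eq_integral => x _.
  rewrite /comp abse_EFin poweR_EFin ger0_norm; last exact: powR_ge0.
  by rewrite /G -powRrM mulfV ?gt_eqF // powRr1. }
have n10 : (0 <= n1)%E by exact: Lnorm_ge0.
have n20 : (0 <= n2)%E by exact: Lnorm_ge0.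
have ni0 : (0 <= ni)%E by exact: Lnorm_ge0.
have step8 : (n1 `^ b <= (n1 + n2) `^ b)%E.
  apply: gt0_ler_poweR; first exact: ltW.
  - by rewrite in_itv /= leey andbT.
  - by rewrite in_itv /= leey andbT adde_ge0.
  by rewrite leeDl.
apply: le_trans step1 _.
rewrite step2 step3 mul1e.
have h1c : (1 <= (1 + c)%:E)%E by rewrite lee_fin; lra.
have h0c : (0 <= (1 + c)%:E)%E by apply: le_trans h1c; rewrite lee_fin.
apply: leeD.
  apply: (@le_trans _ _ ((1 + c)%:E * (n1 + n2))%E).
    rewrite ge0_muleDr //; apply: leeD => //.
    exact: le_trans step4 (lee_pemull n20 h1c).
  exact: (lee_wpmul2r (adde_ge0 n10 n20) (leeDl _ ni0)).
apply: le_trans step5 _.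
apply: lee_pmul; [exact: Lnorm_ge0 | exact: Lnorm_ge0 | exact: step6 | by rewrite step7].
Qed.
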